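(* Let $I=\{1,2\}$, $A=\{x,y\}$ with $x\ne y$, let $\mathcal C=\mathcal C(I,A,(\rho_i)_{i\in I},(C^a)_{a\in A})$ be a Cartan scheme with $\rho_1(x)=\rho_2(x)=y$ and $\rho_1(y)=\rho_2(y)=x$, and let $\mathcal R=\mathcal R(\mathcal C,(R^a)_{a\in A})$ be a root system of type $\mathcal C$. Then $\mathcal R$ is finite if and only if $\mathcal R$ is standard and $C^x=C^y$ is of finite type, that is, $c^x_{12}=c^x_{21}=0$ or $c^x_{12}c^x_{21}\in\{1,2,3\}$.
   Context: Let $\{\alpha_i\mid i\in I\}$ be the standard basis of $\mathbb Z^I$; $\mathbb N_0=\{0,1,2,\dots\}$. A generalized Cartan matrix is $C=(c_{ij})_{i,j\in I}\in\mathbb Z^{I\times I}$ with $c_{ii}=2$, $c_{jk}\le0$ for $j\ne k$, and $c_{ij}=0\Rightarrow c_{ji}=0$. A Cartan scheme $\mathcal C=\mathcal C(I,A,(\rho_i)_{i\in I},(C^a)_{a\in A})$ consists of a nonempty set $A$, maps $\rho_i:A\to A$ and generalized Cartan matrices $C^a=(c^a_{jk})_{j,k\in I}$ such that (C1) $\rho_i^2=\mathrm{id}$ and (C2) $c^a_{ij}=c^{\rho_i(a)}_{ij}$ for all $a\in A$, $i,j\in I$. It (and any root system of its type) is called standard if $C^a=C^b$ for all $a,b\in A$. For $i\in I$, $a\in A$ let $\sigma_i^a\in\mathrm{Aut}(\mathbb Z^I)$, $\sigma_i^a(\alpha_j)=\alpha_j-c^a_{ij}\alpha_i$. A root system of type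 $\mathcal C$ is a family $\mathcal R=\mathcal R(\mathcal C,(R^a)_{a\in A})$ of subsets $R^a\subset\mathbb Z^I$ such that, writing $R^a_+=R^a\cap\mathbb N_0^I$ and $m^a_{i,j}=|R^a\cap(\mathbb N_0\alpha_i+\mathbb N_0\alpha_j)|$, for all $a\in A$, $i,j\in I$: (R1) $R^a=R^a_+\cup(-R^a_+)$; (R2) $R^a\cap\mathbb Z\alpha_i=\{\alpha_i,-\alpha_i\}$; (R3) $\sigma_i^a(R^a)=R^{\rho_i(a)}$; (R4) if $i\neq j$ and $m^a_{i,j}$ is finite then $(\rho_i\rho_j)^{m^a_{i,j}}(a)=a$. It is finite if every $R^a$ is finite. *)

(* Defs.v *)
From mathcomp Require Import all_boot all_order all_algebra.
Set Implicit Arguments. Unset Strict Implicit. Unset Printing Implicit Defensive.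
Import GRing.Theory Num.Theory.
Local Open Scope ring_scope.

(* Z^I is modelled as {ffun I -> int}; alpha i is the standard basis vector. *)
Definition alpha (I : finType) (i : I) : {ffun I -> int} := [ffun j => (i == j)%:Z].

Definition gcm (I : finType) (c : I -> I -> int) : Prop :=
  (forall i, c i i = 2) /\
  (forall j k, j != k -> c j k <= 0) /\
  (forall i j, c i j = 0 -> c j i = 0).

(* Cartan scheme C(I, A, (rho_i), (C^a)) ; C a i j = c^a_{ij} *)
Definition cartan_scheme (I : finType) (A : Type) (rho : I -> A -> A)
  (C : A -> I -> I -> int) : Prop :=
  (forall a, gcm (C a)) /\
  (forall i a, rho i (rho i a) = a) /\
  (forall a i j, C a i j = C (rho i a) i j).

Definition standard (I : finType) (A : Type) (C : A -> I -> I -> int) : Prop :=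
  forall a b, C a = C b.

(* sigma_i^a, the linear map with alpha_j |-> alpha_j - c^a_{ij} alpha_i *)
Definition sigma (I : finType) (A : Type) (C : A -> I -> I -> int) (i : I) (a : A)
  (v : {ffun I -> int}) : {ffun I -> int} :=
  v - alpha i *~ (\sum_(j : I) C a i j * v j).

Definition nonneg (I : finType) (v : {ffun I -> int}) : Prop := forall k, 0 <= v k.

Definition has_card (T : eqType) (S : T -> Prop) (m : nat) : Prop :=
  exists s : seq T, uniq s /\ size s = m /\ (forall v, S v <-> v \in s).

Definition finite_set (T : eqType) (S : T -> Prop) : Prop :=
  exists s : seq T, forall v, S v <-> v \in s.

Definition in_cone (I : finType) (i j : I) (v : {ffun I -> int}) : Prop :=
  exists m n : nat, v = alpha i *+ m + alpha j *+ n.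

Definition root_system (I : finType) (A : Type) (rho : I -> A -> A)
  (C : A -> I -> I -> int) (R : A -> {ffun I -> int} -> Prop) : Prop :=
  (forall a v, R a v <-> ((R a v /\ nonneg v) \/ (R a (- v) /\ nonneg (- v)))) /\
  (forall a i v, (R a v /\ exists z : int, v = alpha i *~ z)
                 <-> (v = alpha i \/ v = - alpha i)) /\
  (forall a i w, R (rho i a) w <-> exists v, R a v /\ sigma C i a v = w) /\
  (forall a i j (m : nat), i != j ->
     has_card (fun v => R a v /\ in_cone i j v) m ->
     iter m (fun b => rho i (rho j b)) a = a).

Definition finite_rs (I : finType) (A : Type) (R : A -> {ffun I -> int} -> Prop) : Prop :=
  forall a, finite_set (R a).

(* Main.v *)
Require Import Defs.
From mathcomp Require Import all_boot all_order all_algebra zify ring.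
From Stdlib Require Import FunctionalExtensionality Classical ClassicalEpsilon.
Import Order.TTheory GRing.Theory Num.Theory.
Local Open Scope ring_scope.

Definition step (a b : int) (bb : bool) (p : int * int) : int * int :=
  if bb then (- p.1 - a * p.2, p.2) else (p.1, - p.2 - b * p.1).
Fixpoint fwdm a b k p := match k with 0%N => p | k'.+1 => step a b (~~ odd k') (fwdm a b k' p) end.
Definition Pm (u : int * int) := ((0 <= u.1 /\ 0 <= u.2) \/ (u.1 <= 0 /\ u.2 <= 0)) /\ u.1 <> 0 /\ u.2 <> 0.

Lemma arith a b (m n : int) :
  (a = 0 /\ b = 0) \/ (a = -1 /\ b = -1) \/ (a = -1 /\ b = -2) \/ (a = -2 /\ b = -1) \/
      (a = -1 /\ b = -3) \/ (a = -3 /\ b = -1) ->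
  (forall k, (k < 7)%N -> Pm (fwdm a b k (m,n))) -> False.
Proof.
move=> hab H.
have := H 0%N isT; have := H 1%N isT; have := H 2%N isT; have := H 3%N isT;
  have := H 4%N isT; have := H 5%N isT; have := H 6%N isT.
by case: hab => [[-> ->]|[[-> ->]|[[-> ->]|[[-> ->]|[[-> ->]|[-> ->]]]]]]; rewrite /Pm /=; lia.
Qed.

Lemma cases (a b : int) : a <= 0 -> b <= 0 -> (a = 0 -> b = 0) -> (b = 0 -> a = 0) ->
  ((a = 0 /\ b = 0) \/ a * b \in [:: 1; 2; 3]) ->
  (a = 0 /\ b = 0) \/ (a = -1 /\ b = -1) \/ (a = -1 /\ b = -2) \/ (a = -2 /\ b = -1) \/
      (a = -1 /\ b = -3) \/ (a = -3 /\ b = -1).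
Proof.
move=> ha hb h1 h2 [[-> ->]|]; first by left.
rewrite !inE => /orP[/eqP H|/orP[/eqP H|/eqP H]].
all: have hA : -3 <= a by nia.
all: have hB : -3 <= b by nia.
all: have : a = -1 \/ a = -2 \/ a = -3 by lia.
all: case=> [Ha|[Ha|Ha]]; subst a.
all: have : b = -1 \/ b = -2 \/ b = -3 by lia.
all: case=> [Hb|[Hb|Hb]]; subst b => //.
all: tauto.
Qed.

Lemma inv (a b m n : int) : 0 < - a -> 0 < - b -> 4 <= a * b ->
  0 <= m -> 0 <= n -> 2 * n < - b * m ->
  let u := step a b true (step a b false (m, n)) in
  0 <= u.1 /\ 0 <= u.2 /\ 2 * u.2 < - b * u.1 /\ m < u.1.
Proof.
move=> ha hb hab hm hn hi /=.
set n' := - n - b * m.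
have hn' : n < n' by rewrite /n'; lia.
have h1 : 2 * (- a) * n < (a * b) * m by nia.
have h2 : 2 * m < - a * n' by nia.
set m' := - m - a * n'.
have h3 : m < m' by rewrite /m'; lia.
have h4 : 2 * (-b) * m < (a*b) * n' by nia.
have h5 : 2 * n' < - b * m' by rewrite /m'; nia.
lia.
Qed.

Definition mk (m n : int) : {ffun 'I_2 -> int} := [ffun j => if j == ord0 then m else n].
Lemma I2P (j : 'I_2) : j = ord0 \/ j = ord_max.
Proof. case: j => [[|[|k]] Hk]; [left|right|by []]; exact: val_inj. Qed.
Lemma mk0 m n : mk m n ord0 = m. Proof. by rewrite ffunE. Qed.
Lemma mk1 m n : mk m n ord_max = n. Proof. by rewrite ffunE. Qed.
Lemma mkE (v : {ffun 'I_2 -> int}) : v = mk (v ord0) (v ord_max).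
Proof. by apply/ffunP=> j; rewrite ffunE; case: (I2P j) => ->. Qed.
Lemma mk_inj m n m' n' : mk m n = mk m' n' -> m = m' /\ n = n'.
Proof. by move=> H; split; [rewrite -(mk0 m n) H mk0|rewrite -(mk1 m n) H mk1]. Qed.

Lemma sigmaE (A : Type) (C : A -> 'I_2 -> 'I_2 -> int) i a v j :
  sigma C i a v j = v j - (alpha i j) *~ (C a i ord0 * v ord0 + C a i ord_max * v ord_max).
Proof.
rewrite /sigma !ffunE ffunMzE !ffunE big_ord_recl big_ord1.
by have -> : lift ord0 ord0 = ord_max :> 'I_2 by exact: val_inj.
Qed.

Section Main.
Variables (A : Type) (x y : A) (hxy : x <> y) (hA : forall a : A, a = x \/ a = y)
  (rho : 'I_2 -> A -> A) (C : A -> 'I_2 -> 'I_2 -> int)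
  (HC : cartan_scheme rho C)
  (hrho : forall i : 'I_2, rho i x = y /\ rho i y = x)
  (R : A -> {ffun 'I_2 -> int} -> Prop)
  (HR : root_system rho C R).

Lemma Cxy a0 : C a0 = C x.
Proof.
case: (hA a0) => -> //.
apply: functional_extensionality => i; apply: functional_extensionality => j.
by case: HC => _ [_ H]; rewrite (H x i j) (proj1 (hrho i)).
Qed.

Let a := C x ord0 ord_max.
Let b := C x ord_max ord0.
Let c00 : C x ord0 ord0 = 2. Proof. by case: HC => [H _]; case: (H x). Qed.
Let c11 : C x ord_max ord_max = 2. Proof. by case: HC => [H _]; case: (H x). Qed.

Definition S (bb : bool) := sigma C (if bb then ord0 else ord_max) x.

Lemma S_mk bb m n : S bb (mk m n) = mk (step a b bb (m, n)).1 (step a b bb (m, n)).2.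
Proof.
apply/ffunP => j; rewrite /S sigmaE !mk0 !mk1.
case: bb; case: (I2P j) => ->; rewrite /step /alpha !ffunE /= ?c00 ?c11 -/a -/b;
  rewrite ?mulr1z ?mulr0z /=; ring.
Qed.

Lemma R_sigma a0 i v : R a0 v -> R (rho i a0) (sigma C i x v).
Proof.
case: HR => _ [_ [R3 _]] Hv; apply/(R3 a0 i _); exists v; split => //.
by rewrite /sigma (Cxy a0).
Qed.

Definition inR v := R x v \/ R y v.

Lemma inR_S bb v : inR v -> inR (S bb v).
Proof.
rewrite /S; set i := (if bb then _ else _).
case: (hrho i) => E1 E2; by case=> /(@R_sigma _ i _); rewrite ?E1 ?E2 /inR; tauto.
Qed.

Lemma inR_sd v : inR v ->
  (0 <= v ord0 /\ 0 <= v ord_max) \/ (v ord0 <= 0 /\ v ord_max <= 0).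
Proof.
case: HR => R1 _.
have H : forall a0, R a0 v -> (0 <= v ord0 /\ 0 <= v ord_max) \/ (v ord0 <= 0 /\ v ord_max <= 0).
  move=> a0 /(R1 a0 v) [[_ Hn]|[_ Hn]]; [left|right]; split.
  - exact: Hn.
  - exact: Hn.
  - by have := Hn ord0; rewrite !ffunE oppr_ge0.
  - by have := Hn ord_max; rewrite !ffunE oppr_ge0.
by case; apply: H.
Qed.

Lemma inR_R2 i v : inR v -> (exists z : int, v = alpha i *~ z) -> v = alpha i \/ v = - alpha i.
Proof.
case: HR => _ [R2 _] Hv Hz.
by case: Hv => Hv; [apply: (R2 x i v).1|apply: (R2 y i v).1]; split.
Qed.

Lemma inR_zero1 v : inR v -> v ord_max = 0 -> v = alpha ord0 \/ v = - alpha ord0.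
Proof.
move=> Hv H0; apply: inR_R2 => //; exists (v ord0).
apply/ffunP => j; rewrite ffunMzE !ffunE; case: (I2P j) => -> /=.
  by rewrite mulrzz mul1r.
by rewrite mulrzz mul0r H0.
Qed.

Lemma inR_zero0 v : inR v -> v ord0 = 0 -> v = alpha ord_max \/ v = - alpha ord_max.
Proof.
move=> Hv H0; apply: inR_R2 => //; exists (v ord_max).
apply/ffunP => j; rewrite ffunMzE !ffunE; case: (I2P j) => -> /=.
  by rewrite mulrzz mul0r H0.
by rewrite mulrzz mul1r.
Qed.

Lemma inR_alpha0 : inR (alpha ord0).
Proof. case: HR => _ [R2 _]; left; have := (R2 x ord0 (alpha ord0)).2 (or_introl erefl); tauto. Qed.

Fixpoint fwd k v := match k with 0%N => v | k'.+1 => S (~~ odd k') (fwd k' v) end.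
Fixpoint bwd k w := match k with 0%N => w | k'.+1 => bwd k' (S (~~ odd k') w) end.

Lemma SS bb v : S bb (S bb v) = v.
Proof.
rewrite [v]mkE !S_mk; case: bb; rewrite /step /=; congr mk; ring.
Qed.

Lemma bwd_fwd k v : bwd k (fwd k v) = v.
Proof. by elim: k => //= k IH; rewrite SS. Qed.

Lemma inR_fwd k v : inR v -> inR (fwd k v).
Proof. by move=> Hv; elim: k => //= k IH; apply: inR_S. Qed.

Lemma fwd_mk k p : fwd k (mk p.1 p.2) = mk (fwdm a b k p).1 (fwdm a b k p).2.
Proof. by elim: k => //= k ->; rewrite S_mk. Qed.

Definition L4 : seq {ffun 'I_2 -> int} := [:: alpha (ord0 : 'I_2); alpha (ord_max : 'I_2); - alpha (ord0 : 'I_2); - alpha (ord_max : 'I_2)].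

Lemma key v : inR v ->
  (a = 0 /\ b = 0) \/ (a = -1 /\ b = -1) \/ (a = -1 /\ b = -2) \/ (a = -2 /\ b = -1) \/
      (a = -1 /\ b = -3) \/ (a = -3 /\ b = -1) ->
  exists k, (k < 7)%N /\ fwd k v \in L4.
Proof.
move=> Hv hab.
case: (classic (exists k, (k < 7)%N /\ fwd k v \in L4)) => // Hn.
exfalso; apply: (@arith a b (v ord0) (v ord_max) hab) => k hk.
set u := fwd k v.
have Hu : inR u by apply: inR_fwd.
have -> : fwdm a b k (v ord0, v ord_max) = (u ord0, u ord_max).
  have E := fwd_mk k (v ord0, v ord_max); rewrite /= -mkE in E.
  by rewrite /u E mk0 mk1; case: fwdm.
rewrite /Pm /=; split; first exact: inR_sd u Hu.
split=> H0.
- apply: Hn; exists k; split => //; rewrite -/u.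
  by case: (inR_zero0 u Hu H0) => ->; rewrite !inE eqxx ?orbT.
- apply: Hn; exists k; split => //; rewrite -/u.
  by case: (inR_zero1 u Hu H0) => ->; rewrite !inE eqxx ?orbT.
Qed.

Lemma inR_of a0 v : R a0 v -> inR v.
Proof. by case: (hA a0) => -> Hv; [left|right]. Qed.

Lemma fin_dir :
  (a = 0 /\ b = 0) \/ (a = -1 /\ b = -1) \/ (a = -1 /\ b = -2) \/ (a = -2 /\ b = -1) \/
      (a = -1 /\ b = -3) \/ (a = -3 /\ b = -1) -> finite_rs R.
Proof.
move=> hab a0.
pose pb u := if excluded_middle_informative (R a0 u) then true else false.
exists (filter pb [seq bwd k w | k <- iota 0 7, w <- L4]) => v.
rewrite mem_filter /pb; case: excluded_middle_informative => Hv; rewrite ?andTb ?andFb; split => // _.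
have [k [hk hw]] := key v (inR_of a0 v Hv) hab.
rewrite -(bwd_fwd k v); apply: allpairs_f => //.
by rewrite mem_iota.
Qed.

Lemma bound (s : seq {ffun 'I_2 -> int}) : exists B, forall u, u \in s -> u ord0 <= B.
Proof.
elim: s => [|h s [B HB]]; first by exists 0.
exists (Num.max (h ord0) B) => u; rewrite in_cons => /orP[/eqP ->|/HB H].
  by rewrite le_max lexx.
by rewrite le_max H orbT.
Qed.

Lemma inf_dir : finite_rs R -> a < 0 -> b < 0 -> 4 <= a * b -> False.
Proof.
move=> Hf ha hb hab.
have [sx Hsx] := Hf x; have [sy Hsy] := Hf y.
have [B HB] := bound (sx ++ sy).
pose g k := iter k (fun v => S true (S false v)) (alpha ord0).
have Hg : forall k, inR (g k).
  elim=> [|k IH]; first exact: inR_alpha0.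
  by rewrite /g iterS -/(g k); apply: inR_S; apply: inR_S.
have Hinv : forall k, exists m n, g k = mk m n /\ 0 <= m /\ 0 <= n /\ 2 * n < - b * m /\ (k%:Z + 1 <= m).
  elim=> [|k [m [n [E [h1 [h2 [h3 h4]]]]]]].
    exists 1, 0; split.
      by apply/ffunP => j; rewrite !ffunE; case: (I2P j) => ->.
    by lia.
  have := @inv a b m n ltac:(lia) ltac:(lia) hab h1 h2 h3.
  rewrite /=; move=> [i1 [i2 [i3 i4]]].
  eexists; eexists; split.
    by change (g k.+1) with (S true (S false (g k))); rewrite E !S_mk /=.
  split; first exact: i1. split; first exact: i2. split; first exact: i3.
  lia.
have [m [n [E [_ [_ [_ h4]]]]]] := Hinv `|B|%N.
have Hin : g `|B|%N \in sx ++ sy.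
  by rewrite mem_cat; case: (Hg `|B|%N) => [/Hsx ->|/Hsy ->] //; rewrite orbT.
have := HB _ Hin; rewrite E mk0.
lia.
Qed.
End Main.

Theorem proposition5p2 (A : Type) (x y : A) (hxy : x <> y)
  (hA : forall a : A, a = x \/ a = y)
  (rho : 'I_2 -> A -> A) (C : A -> 'I_2 -> 'I_2 -> int)
  (HC : cartan_scheme rho C)
  (hrho : forall i : 'I_2, rho i x = y /\ rho i y = x)
  (R : A -> {ffun 'I_2 -> int} -> Prop)
  (HR : root_system rho C R) :
  finite_rs R <->
  (standard C /\
   ((C x ord0 ord_max = 0 /\ C x ord_max ord0 = 0) \/
    C x ord0 ord_max * C x ord_max ord0 \in [:: 1; 2; 3])).
Proof.
have Hst : standard C by move=> a0 b0; rewrite (Cxy _ _ _ hA _ _ HC hrho a0) (Cxy _ _ _ hA _ _ HC hrho b0).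
have [ha [hb [h1 h2]]] : C x ord0 ord_max <= 0 /\ C x ord_max ord0 <= 0 /\
   (C x ord0 ord_max = 0 -> C x ord_max ord0 = 0) /\ (C x ord_max ord0 = 0 -> C x ord0 ord_max = 0).
  case: HC => [/(_ x) [_ [Hle Hz]] _].
  by split; [exact: Hle|split; [exact: Hle|split; apply: Hz]].
split.
- move=> Hf; split => //.
  have [Ha|Ha] := eqVneq (C x ord0 ord_max) 0; first by left; split => //; apply: h1.
  have Hb : C x ord_max ord0 != 0 by apply/eqP => /h2; apply/eqP.
  right.
  have [Hab|Hab] := leP (C x ord0 ord_max * C x ord_max ord0) 3.
    have : C x ord0 ord_max * C x ord_max ord0 = 1 \/ C x ord0 ord_max * C x ord_max ord0 = 2 \/
           C x ord0 ord_max * C x ord_max ord0 = 3 by nia.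
    by case=> [->|[->|->]].
  exfalso; apply: (inf_dir _ _ _ hA _ _ HC hrho _ HR Hf); lia.
- case=> _ H; apply: (fin_dir _ _ _ hA _ _ HC hrho _ HR).
  exact: cases.
Qed.
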